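(* Let $T$ be a tree with $ex(T)\ge1$, and let $g:V(T)\rightarrow[0,1]$ be any minimum resolving function of $T$. Then, for each $v\in M_2(T)$ with $ter(v)=\alpha\ge2$, $g(V(T_v)-\{v\})=\frac{\alpha}{2}$, and $\sum_{v\in M_2(T)}(g(V(T_v))-g(v))=\dim_f(T)$.
   Context: $d(x,y)$ is the distance in the tree. For a function $g$ on $V(T)$ and $U\subseteq V(T)$, $g(U)=\sum_{s\in U}g(s)$. $R\{x,y\}=\{z: d(x,z)\ne d(y,z)\}$; $g:V(T)\to[0,1]$ is a resolving function if $g(R\{x,y\})\ge1$ for all distinct $x,y$; $\dim_f(T)$ is the minimum of $g(V(T))$ over resolving functions, and a minimum resolving function is one attaining it. A leaf is a vertex of degree one; a major vertex has degree at least three. A leaf $\ell$ is a terminal vertex of a major vertex $v$ if $d(\ell,v)<d(\ell,w)$ for every other major vertex $w$. $ter(v)$ is the number of terminal vertices of $v$; an exterior major vertex is a major vertex with $ter(v)>0$. $M(T)$ is the set of exterior major vertices, $ex(T)=|M(T)|$, $M_1(T)=\{w\in M(T): ter(w)=1\}$, $M_2(T)=\{w\in M(T): ter(w)\ge2\}$. For $v\in M(T)$, $T_v$ is the subtree induced by $v$ and all vertices on the paths joining $v$ to its terminal vertices. *)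

(* Defs.v *)
From mathcomp Require Import all_boot all_order all_algebra.
From mathcomp Require Import boolp.
Set Implicit Arguments. Unset Strict Implicit. Unset Printing Implicit Defensive.
Import Order.TTheory GRing.Theory Num.Theory.
Local Open Scope ring_scope.

Section Tree.
Variable V : finType.
Variable e : rel V.

Definition is_tree : Prop :=
  [/\ symmetric e, irreflexive e,
      (forall x y, connect e x y) &
      (forall p : seq V, uniq p -> (3 <= size p)%N -> ~~ cycle e p)].

Fixpoint ball (n : nat) (x : V) : {set V} :=
  match n with
  | 0 => [set x]
  | n'.+1 => ball n' x :|: [set y | [exists z in ball n' x, e z y]]
  end.

(* graph distance d(x,y): least n with y within n steps of x
   (all distances in a connected graph on V are < #|V|) *)
Definition dist (x y : V) : nat :=
  find (fun n => y \in ball n x) (iota 0 #|V|).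

Definition deg (v : V) : nat := #|[set w | e v w]|.
Definition leaf (v : V) : bool := deg v == 1%N.
Definition major (v : V) : bool := (3 <= deg v)%N.

Definition terminal (v l : V) : bool :=
  [&& major v, leaf l & [forall w, (major w && (w != v)) ==> (dist l v < dist l w)%N]].
Definition ter (v : V) : nat := #|[set l | terminal v l]|.

Definition Mset : {set V} := [set v | major v && (0 < ter v)%N].
Definition ex : nat := #|Mset|.
Definition M1 : {set V} := [set w in Mset | ter w == 1%N].
Definition M2 : {set V} := [set w in Mset | (2 <= ter w)%N].

Definition on_path (x y u : V) : Prop :=
  exists p : seq V, [&& path e x p, last x p == y, uniq (x :: p) & u \in x :: p].

Definition Tv (v : V) : {set V} :=
  [set u | `[< exists2 l, terminal v l & on_path v l u >]].

Definition Rset (x y : V) : {set V} := [set z | dist x z != dist y z].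

Variable R : realFieldType.

Definition gsum (g : V -> R) (U : {set V}) : R := \sum_(s in U) g s.

Definition resolving (g : V -> R) : Prop :=
  (forall s, 0 <= g s <= 1) /\
  (forall x y, x != y -> 1 <= gsum g (Rset x y)).

Definition is_dimf (x : R) : Prop :=
  (exists2 g, resolving g & gsum g setT = x) /\
  (forall h, resolving h -> x <= gsum h setT).

Definition min_resolving (g : V -> R) : Prop :=
  resolving g /\ (forall h, resolving h -> gsum g setT <= gsum h setT).

End Tree.

(* Main.v *)
Require Import Defs.
From mathcomp Require Import all_boot all_order all_algebra.
From mathcomp Require Import boolp.
From mathcomp Require Import zify ring lra.
Set Implicit Arguments. Unset Strict Implicit. Unset Printing Implicit Defensive.
Import Order.TTheory GRing.Theory Num.Theory.


Ltac prune := repeat match goal with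
  | H : ?T |- _ => lazymatch T with
       | is_true (_ <= _) => fail
       | @eq nat _ _ => fail
       | _ => clear H
       end
  end.
Ltac flia := prune; lia.
Section TreeTheory.
Variable V : finType.
Variable e : rel V.
Hypothesis sym_e : symmetric e.
Hypothesis irr_e : irreflexive e.
Hypothesis conn_e : forall x y, connect e x y.
Hypothesis acyc : forall p : seq V, uniq p -> (3 <= size p)%N -> ~~ cycle e p.

Local Notation ball := (ball e).
Local Notation d := (dist e).

Lemma ballS n x y : (y \in ball n.+1 x) = (y \in ball n x) || [exists z in ball n x, e z y].
Proof. by rewrite /= !inE. Qed.

Lemma ball0 x y : (y \in ball 0 x) = (y == x).
Proof. by rewrite /= inE. Qed.

Lemma ball_le m n x y : m <= n -> y \in ball m x -> y \in ball n x.
Proof.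
elim: n => [|n IH]; first by rewrite leqn0 => /eqP ->.
rewrite leq_eqVlt => /orP [/eqP -> //| lt] H.
by rewrite ballS IH.
Qed.

Lemma ball_edge n x z y : z \in ball n x -> e z y -> y \in ball n.+1 x.
Proof. move=> Hz ezy; rewrite ballS; apply/orP; right; apply/existsP; exists z; by rewrite Hz. Qed.

Lemma ball_trans a b x z y : z \in ball a x -> y \in ball b z -> y \in ball (a+b) x.
Proof.
move=> Hz; elim: b y => [|b IH] y.
  by rewrite ball0 addn0 => /eqP ->.
rewrite ballS => /orP [H|/existsP [w /andP [Hw ew]]].
  by rewrite addnS; apply: (ball_le (leqnSn _)); apply: IH.
rewrite addnS; exact: (ball_edge (IH _ Hw) ew).
Qed.

Lemma ball_sym n x y : y \in ball n x -> x \in ball n y.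
Proof.
elim: n y => [|n IH] y; first by rewrite !ball0 eq_sym.
rewrite ballS => /orP [H|/existsP [w /andP [Hw ew]]].
  by apply: (ball_le (leqnSn _)); apply: IH.
have H1 : w \in ball 1 y by apply: (ball_edge (z:=y)); rewrite ?ball0 // sym_e.
by rewrite -add1n; apply: (ball_trans H1 (IH _ Hw)).
Qed.

Lemma path_ball x p : path e x p -> last x p \in ball (size p) x.
Proof.
elim: p x => [|a p IH] x /=; first by rewrite ball0.
move=> /andP [exa pp].
have H1 : a \in ball 1 x by apply: (ball_edge (z:=x)); rewrite ?ball0.
by have := ball_trans H1 (IH _ pp); rewrite add1n.
Qed.

Lemma ball_conn x y : exists2 n, n < #|V| & y \in ball n x.
Proof.
case/connectP: (conn_e x y) => p pp ->.
case: (shortenP pp) => p' pp' up' _.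
exists (size p'); last exact: path_ball.
have := max_card (mem (x :: p')); by rewrite (card_uniqP up') /=.
Qed.

Lemma dist_ball x y : y \in ball (d x y) x.
Proof.
have [n ltn Hn] := ball_conn x y.
have Hh : has (fun n => y \in ball n x) (iota 0 #|V|).
  by apply/hasP; exists n; rewrite // mem_iota.
have := nth_find 0 Hh; rewrite has_find size_iota in Hh.
by rewrite nth_iota.
Qed.

Lemma dist_min x y n : y \in ball n x -> d x y <= n.
Proof.
move=> Hn; rewrite leqNgt; apply/negP => lt.
have [m ltm Hm] := ball_conn x y.
have Hh : has (fun n => y \in ball n x) (iota 0 #|V|).
  by apply/hasP; exists m; rewrite // mem_iota.
have := before_find 0 lt; rewrite has_find size_iota in Hh.
rewrite nth_iota ?Hn //; rewrite /dist in lt; flia.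
Qed.

Lemma d_ball x y n : (y \in ball n x) = (d x y <= n).
Proof.
apply/idP/idP; first exact: dist_min.
move=> H; exact: (ball_le H (dist_ball x y)).
Qed.

Lemma d_sym x y : d x y = d y x.
Proof.
by apply/eqP; rewrite eqn_leq -!d_ball; apply/andP; split; apply: ball_sym; apply: dist_ball.
Qed.

Lemma d_refl x : d x x = 0.
Proof. by apply/eqP; rewrite -leqn0 -d_ball ball0. Qed.

Lemma d_eq0 x y : (d x y == 0) = (x == y).
Proof.
apply/idP/idP; last by move/eqP ->; rewrite d_refl.
by rewrite -leqn0 -d_ball ball0 eq_sym.
Qed.

Lemma d_tri x y z : d x z <= d x y + d y z.
Proof. rewrite -d_ball; exact: (ball_trans (dist_ball x y) (dist_ball y z)). Qed.

Lemma d_edge x y : e x y -> d x y = 1.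
Proof.
move=> exy; apply/eqP; rewrite eqn_leq -d_ball (ball_edge (z:=x)) ?ball0 //=.
rewrite lt0n d_eq0; apply/eqP => exy'; by rewrite exy' irr_e in exy.
Qed.

Lemma d_adj x y z : e x y -> d x z <= (d y z).+1.
Proof. move=> exy; have := d_tri x y z; rewrite (d_edge exy); flia. Qed.

Lemma d_step x z n : d x z = n.+1 -> exists2 y, e x y & d y z = n.
Proof.
move=> Hd.
have Hx : x \in ball n.+1 z by rewrite d_ball d_sym Hd.
have Hnx : x \notin ball n z by rewrite d_ball d_sym Hd ltnn.
move: Hx; rewrite ballS (negbTE Hnx) /= => /existsP [w /andP [Hw ew]].
exists w; first by rewrite sym_e.
move: Hw; rewrite d_ball d_sym => Hw.
have exw : e x w by rewrite sym_e.
have := d_tri x w z; rewrite (d_edge exw); flia.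
Qed.


Lemma d_adj' x y z : e x y -> d z x <= (d z y).+1.
Proof. by move=> exy; rewrite !(d_sym z); apply: d_adj. Qed.

Definition avoid (a : V) : rel V := fun u v => [&& u != a, v != a & e u v].

Lemma avoid_sym a : symmetric (avoid a).
Proof. by move=> u v; rewrite /avoid andbCA sym_e. Qed.

Lemma path_avoid_notin a x p : path (avoid a) x p -> a \notin p.
Proof.
elim: p x => [|b p IH] x //= /andP [/and3P [_ hb _] pp].
by rewrite inE negb_or eq_sym hb (IH _ pp).
Qed.

Lemma noV x a b : e x a -> e x b -> a != b -> ~~ connect (avoid x) a b.
Proof.
move=> exa exb neab; apply/negP => /connectP [p pp Eb].
move: exb neab; rewrite Eb.
case: (shortenP pp) => p' pp' up' subp' exb neab.
have xp' : x \notin p'.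
  apply/negP => /subp' xp; by rewrite (negbTE (path_avoid_notin pp)) in xp.
have xa : x != a by apply/eqP => E; rewrite E irr_e in exa.
have Hu : uniq (x :: a :: p') by rewrite /= inE negb_or xa xp' /=; rewrite /= in up'.
have Hs : 3 <= size (x :: a :: p').
  by case: p' {pp' up' subp' exb neab xp' Hu} => [|? ?] //= in neab *; rewrite eqxx in neab.
have Hc : cycle e (x :: a :: p').
  rewrite /= exa rcons_path (sub_path _ pp') /=; last by move=> u v /and3P [].
  by rewrite sym_e.
by have := acyc Hu Hs; rewrite Hc.
Qed.

Lemma avoid_conn a z w : w != a -> d w z <= d a z -> connect (avoid a) w z.
Proof.
move Hn: (d w z) => n; elim: n w Hn => [|n IH] w Hn wa le.
  by move/eqP: Hn; rewrite d_eq0 => /eqP ->.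
have [w' ew' Hw'] := d_step Hn.
have w'a : w' != a by apply/eqP => E; rewrite E in Hw'; flia.
apply: (connect_trans (y:=w')); last by apply: IH => //; flia.
by apply: connect1; rewrite /avoid wa w'a ew'.
Qed.

Lemma K a b c z : e a b -> e a c -> b != c -> d b z <= d a z -> d c z <= d a z -> False.
Proof.
move=> eab eac nbc hb hc.
have ba : b != a by apply/eqP => E; rewrite E irr_e in eab.
have ca : c != a by apply/eqP => E; rewrite E irr_e in eac.
have cb := avoid_conn ba hb; have cc := avoid_conn ca hc.
have : connect (avoid a) b c.
  apply: (connect_trans cb); by rewrite (sym_connect_sym (@avoid_sym a)).
by move: (noV eab eac nbc) => /negP.
Qed.

Lemma dich a b z : e a b -> d b z = (d a z).+1 \/ d a z = (d b z).+1.
Proof.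
move=> eab; have eba : e b a by rewrite sym_e.
have h1 := d_adj z eab; have h2 := d_adj z eba.
case: (ltngtP (d a z) (d b z)) => H; [left|right|]; try flia.
exfalso; case Ez: (d a z) => [|n].
  move/eqP: (Ez); rewrite d_eq0 => /eqP E; move: H; rewrite Ez => /esym /eqP.
  by rewrite d_eq0 -E => /eqP E'; rewrite E' irr_e in eab.
have [a' ea' Ha'] := d_step Ez.
have ba' : b != a' by apply/eqP => E; rewrite -E in Ha'; flia.
by apply: (K (z:=z) eab ea' ba'); flia.
Qed.

Lemma Sep u v z w : e u v -> d v z < d u z -> d u w < d v w -> d w z = d w u + 1 + d v z.
Proof.
move=> euv hz hw.
have evu : e v u by rewrite sym_e.
have hvw : d v w = (d u w).+1 by case: (dich w euv); flia.
have Bv : d w v = d w u + 1 by rewrite !(d_sym w) hvw addn1.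
suff: forall n z, d v z <= n -> d v z < d u z -> d w z = d w u + 1 + d v z.
  by move/(_ _ z (leqnn _) hz).
elim=> [|n IH] {hz}z.
  by rewrite leqn0 d_eq0 => /eqP <- _; rewrite d_refl addn0.
move=> hn hz.
case E: (d v z) => [|k].
  by move/eqP: E; rewrite d_eq0 => /eqP <-; rewrite addn0 Bv.
have Ezv : d z v = k.+1 by rewrite d_sym.
have [z' ez' Hz'] := d_step Ezv.
have s1 := d_sym z' v. have s2 := d_sym u z. have s3 := d_sym u z'.
have t1 := d_adj' u ez'.
have hz' : d v z' < d u z' by flia.
have IHz := IH z' ltac:(flia) hz'.
case: (dich w ez') => H; last first.
  have := d_sym w z; have := d_sym w z'; flia.
exfalso.
case Ek: k => [|k'] in Hz' E hn.
  move/eqP: Hz'; rewrite d_eq0 => /eqP Ez'; subst z'.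
  have evz : e v z by rewrite sym_e.
  have uz : u != z by apply/eqP => Eu; subst z; rewrite d_refl in hz.
  by apply: (K (z:=w) evu evz uz); flia.
have [y ey Hy] := d_step Hz'.
have s4 := d_sym y v. have s5 := d_sym u y. have t2 := d_adj' u ey.
have hy : d v y < d u y by flia.
have IHy := IH y ltac:(flia) hy.
have ez'z : e z' z by rewrite sym_e.
have zy : z != y by apply/eqP => Ezy; subst y; flia.
apply: (K (z:=w) ez'z ey zy); have := d_sym w z; have := d_sym w z'; have := d_sym w y; flia.
Qed.

Lemma WL2 x p : path e x p -> forall w, w \in x :: p -> d w (last x p) <= size p.
Proof.
elim: p x => [|a p IH] x /=.
  by move=> _ w; rewrite inE => /eqP ->; rewrite d_refl.
move=> /andP [exa pp] w; rewrite inE => /orP [/eqP ->|wi].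
  have := IH _ pp a (mem_head _ _); have := d_adj (last a p) exa; flia.
have := IH _ pp w wi; flia.
Qed.

Lemma Gu x p : path e x p -> size p = d x (last x p) -> uniq (x :: p).
Proof.
elim: p x => [|a p IH] x //= /andP [exa pp] Hs.
have Ha := WL2 pp (mem_head _ _).
have := d_adj (last a p) exa => h.
have Hs' : size p = d a (last a p) by flia.
have := IH _ pp Hs'; rewrite /= => ->; rewrite andbT.
apply/negP => xi; have := WL2 pp xi; flia.
Qed.

Lemma GE x y : exists2 p, path e x p & (last x p = y /\ size p = d x y).
Proof.
move Hn: (d x y) => n; elim: n x Hn => [|n IH] x Hn.
  by exists [::]; move/eqP: Hn; rewrite d_eq0 => /eqP ->.
have [x' ex' H'] := d_step Hn.
have [p pp [lp sp]] := IH _ H'.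
by exists (x' :: p); [rewrite /= ex' pp | rewrite /= lp sp].
Qed.

Lemma GV v z l : d v z + d z l = d v l -> on_path e v l z.
Proof.
move=> H.
have [p1 pp1 [lp1 sp1]] := GE v z.
have [p2 pp2 [lp2 sp2]] := GE z l.
exists (p1 ++ p2).
have Hp : path e v (p1 ++ p2) by rewrite cat_path pp1 lp1 pp2.
have Hl : last v (p1 ++ p2) = l by rewrite last_cat lp1 lp2.
rewrite Hp Hl eqxx /=.
apply/andP; split.
  apply: (Gu Hp); rewrite Hl size_cat; flia.
by rewrite -cat_cons mem_cat -lp1 mem_last.
Qed.

Lemma path_avoid a x p : path e a p -> x \notin a :: p -> path (avoid x) a p.
Proof.
elim: p a => [|b p IH] a //= /andP [eab pp].
rewrite !inE !negb_or => /and3P [xa xb xp].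
rewrite /avoid eq_sym xa eq_sym xb eab /=.
by apply: IH; rewrite // inE negb_or xb.
Qed.

Lemma UPG x p z : path e x p -> uniq (x :: p) -> z \in x :: p ->
  d x z + d z (last x p) = d x (last x p).
Proof.
elim: p x => [|a p IH] x /=.
  by move=> _ _; rewrite inE => /eqP ->; rewrite d_refl.
move=> /andP [exa pp] /andP [xn up].
set y := last a p.
have Hd : d x y = (d a y).+1.
  case: (dich y exa) => // H; exfalso.
  have yi : y \in a :: p by apply: mem_last.
  have xy : x != y by apply/eqP => E; rewrite E yi in xn.
  case Ex: (d x y) => [|n]; first by move/eqP: Ex; rewrite d_eq0 (negbTE xy).
  have [b exb Hb] := d_step Ex.
  have ab : a != b by apply/eqP => E; subst b; flia.
  have c1 : connect (avoid x) a y.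
    apply/connectP; exists p => //; exact: path_avoid.
  have bx : b != x by apply/eqP => E; subst b; rewrite irr_e in exb.
  have c2 : connect (avoid x) b y by apply: avoid_conn => //; flia.
  have : connect (avoid x) a b.
    apply: (connect_trans c1); by rewrite (sym_connect_sym (@avoid_sym x)).
  by move: (noV exa exb ab) => /negP.
rewrite inE => /orP [/eqP ->|zi]; first by rewrite d_refl.
have := IH _ pp up zi; rewrite -/y => h3; have := d_adj z exa; have := d_tri x z y; flia.
Qed.

Lemma on_path_geo v l z : on_path e v l z -> d v z + d z l = d v l.
Proof.
case=> p /and4P [pp /eqP lp up zi]; rewrite -lp; exact: UPG.
Qed.

Definition br (a b : V) : {set V} := [set z | d b z < d a z].

Lemma inbr a b z : (z \in br a b) = (d b z < d a z).
Proof. by rewrite inE. Qed.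

Lemma deg3 m a b c : e m a -> e m b -> e m c -> a != b -> a != c -> b != c -> major e m.
Proof.
move=> ea eb ec ab ac bc; rewrite /major /deg.
have <- : #|[set a; b; c]| = 3.
  rewrite -setUA !cardsU1 cards1 !inE.
  by rewrite (negbTE bc) (negbTE ab) (negbTE ac).
apply: subset_leq_card; apply/subsetP => y; rewrite !inE.
by case/orP => [/orP [] |] /eqP ->.
Qed.

Lemma leaf_uniq l a b : leaf e l -> e l a -> e l b -> a = b.
Proof.
rewrite /leaf /deg => /cards1P [x Hx] ea eb.
have : a \in [set w | e l w] by rewrite inE.
have : b \in [set w | e l w] by rewrite inE.
by rewrite Hx !inE => /eqP -> /eqP ->.
Qed.

Lemma leafI l s : e l s -> (forall y, e l y -> y = s) -> leaf e l.
Proof.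
move=> es H; rewrite /leaf /deg.
have -> : [set w | e l w] = [set s].
  apply/setP => y; rewrite !inE; apply/idP/eqP; first exact: H.
  by move->.
by rewrite cards1.
Qed.

Lemma major_neq_leaf v : major e v -> leaf e v -> False.
Proof. by rewrite /major /leaf => H /eqP E; rewrite E in H. Qed.

Lemma two_ter c l1 l2 : terminal e c l1 -> terminal e c l2 -> l1 != l2 -> c \in M2 e.
Proof.
move=> t1 t2 n12.
have H2 : 1 < ter e c.
  apply/card_gt1P; exists l1, l2; by rewrite !inE t1 t2.
move: (t1) => /and3P [mc _ _].
by rewrite !inE mc /=; apply/andP; split => //; flia.
Qed.

Lemma TL c c' : major e c -> e c c' -> (forall z, z \in br c c' -> ~~ major e z) ->
  exists2 l, l \in br c c' & terminal e c l.
Proof.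
move=> mc ecc' MF.
have Pc' : c' \in br c c' by rewrite inbr d_refl d_edge.
case: (arg_maxnP (fun i => d c i) Pc') => l lin lmax.
exists l => //.
have {lin}lin : l \in br c c' by exact: lin.
have lc : l != c by apply/eqP => E; move: lin; rewrite E inbr d_refl.
move: (lin); rewrite inbr => hl.
have lc1 : 0 < d l c by rewrite lt0n d_eq0.
case Ek: (d l c) lc1 => [|k] // _.
have [s es Hs] := d_step Ek.
have leafl : leaf e l.
  apply: (leafI es) => y ey; apply/eqP; apply/negP => ys.
  case: (dich c ey) => H.
    have yin : y \in br c c'.
      have eyl : e y l by rewrite sym_e.
      rewrite inbr; have := d_adj' c' eyl; have := d_sym c y; have := d_sym c l; flia.
    have := lmax y yin; have := d_sym c y; have := d_sym c l; flia.
  have sy : s != y by apply/eqP => E; apply: ys; rewrite E.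
  by apply: (K (z:=c) es ey sy); flia.
apply/and3P; split => //.
apply/forallP => w; apply/implyP => /andP [mw wc].
have wn : w \notin br c c' by apply/negP => /MF; rewrite mw.
move: wn; rewrite inbr -leqNgt => wn.
have hw : d c w < d c' w by case: (dich w ecc'); flia.
have := Sep ecc' hl hw.
have := d_sym l c; have := d_sym w l; have := d_sym w c.
have : 0 < d c w by rewrite lt0n d_eq0 eq_sym.
case: (dich l ecc'); flia.
Qed.

Lemma br_disj a b c z : e a b -> e a c -> b != c -> z \in br a b -> z \in br a c -> False.
Proof.
move=> eab eac bc; rewrite !inbr => h1 h2.
by apply: (K (z:=z) eab eac bc); flia.
Qed.

Lemma BL a b : e a b -> (exists2 w, w \in br a b & major e w) ->
  exists c, [/\ c \in M2 e & exists l1 l2, [/\ l1 != l2, l1 \in br a b, l2 \in br a b,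
     terminal e c l1 & terminal e c l2]].
Proof.
move=> eab [w win mw].
have Pw : (w \in br a b) && major e w by rewrite win mw.
case: (@arg_maxnP _ w (fun i => (i \in br a b) && major e i) (fun i => d a i) Pw) => c /andP [cin mc] cmax.
have {cin}cin : c \in br a b by exact: cin.
move: (cin); rewrite inbr => hc.
set N := [set y | e c y].
set N' := [set y | e c y && (d a c < d a y)].
have N3 : 2 < #|N| by [].
have Nd : #|N :\: N'| <= 1.
  have key : forall y, y \in N :\: N' -> e c y /\ d a y <= d a c.
    move=> y; rewrite !inE => /andP [H ey]; split => //.
    by rewrite leqNgt; apply/negP => H'; rewrite ey H' in H.
  apply/card_le1P => y1 y1in y2.
  have [ey1 h1] := key _ y1in.
  apply/idP/eqP => [y2in|->//].
  have [ey2 h2] := key _ y2in.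
  case: (eqVneq y2 y1) => // ne; exfalso.
  move: (d_sym y2 a) (d_sym y1 a) (d_sym c a) => s1 s2 s3.
  by apply: (K (z:=a) ey2 ey1 ne); flia.
have N'2 : 1 < #|N'|.
  have := cardsID N' N.
  have -> : N :&: N' = N' by apply/setIidPr; apply/subsetP => y; rewrite !inE => /andP [].
  flia.
case/card_gt1P: N'2 => c1 [c2 [c1in c2in c12]].
move: c1in c2in; rewrite !inE => /andP [ec1 hc1] /andP [ec2 hc2].
have sub : forall ci, e c ci -> d a c < d a ci -> forall z, z \in br c ci ->
    z \in br a b /\ d a c < d a z.
  move=> ci eci hci z; rewrite inbr => hz.
  have hci' : d c a < d ci a by rewrite (d_sym c) (d_sym ci).
  have := Sep eci hz hci'.
  have := d_tri b c z.
  case: (dich z eci) => H; first flia.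
  rewrite inbr; have := d_sym a z; have := d_sym a c; flia.
have MF : forall ci, e c ci -> d a c < d a ci -> forall z, z \in br c ci -> ~~ major e z.
  move=> ci eci hci z zin; apply/negP => mz.
  have [zab hz] := sub ci eci hci z zin.
  have := cmax z; rewrite zab mz => /(_ isT); flia.
have [l1 l1in t1] := TL mc ec1 (MF c1 ec1 hc1).
have [l2 l2in t2] := TL mc ec2 (MF c2 ec2 hc2).
have l12 : l1 != l2.
  apply/eqP => E; subst l2; exact: (br_disj ec1 ec2 c12 l1in l2in).
exists c; split; first exact: (two_ter t1 t2 l12).
exists l1, l2; split => //.
  exact: (sub c1 ec1 hc1 l1 l1in).1.
exact: (sub c2 ec2 hc2 l2 l2in).1.
Qed.

Lemma GC v l u : terminal e v l -> e v u -> d u l < d v l ->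
  forall z, z \in br v u -> d v z + d z l = d v l.
Proof.
move=> tvl evu hu.
move: (tvl) => /and3P [mv ll /forallP Hall].
have hu' : d v l = (d u l).+1 by case: (dich l evu); flia.
suff H : forall j z, d v z = j.+1 -> z \in br v u -> d v z + d z l = d v l.
  move=> z zin; move: (zin); rewrite inbr => hz.
  case E: (d v z) hz => [|j] // _; rewrite -E; exact: (H j).
elim=> [|j IH] z Hz zin; move: (zin); rewrite inbr => hz.
  have : d u z == 0 by flia.
  by rewrite d_eq0 => /eqP <-; rewrite (d_edge evu) hu' add1n.
have Ezv : d z v = j.+2 by rewrite d_sym.
have [z' ez' Hz'] := d_step Ezv.
have ez'z : e z' z by rewrite sym_e.
have z'in : z' \in br v u.
  rewrite inbr ltnNge; apply/negP => H.
  have H2 : d v z' < d u z' by case: (dich z' evu); flia.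
  have := Sep evu hz H2; rewrite (d_edge ez'z); flia.
have Hz'v : d v z' = j.+1 by rewrite d_sym.
have IHz := IH z' Hz'v z'in.
have [a ea Ha] := d_step Hz'.
have za : z != a by apply/eqP => E; subst a; flia.
case Em: (d z' l) => [|m].
  move/eqP: Em; rewrite d_eq0 => /eqP E; subst z'.
  by have := leaf_uniq ll ez'z ea; move/eqP: za.
have nmz' : ~~ major e z'.
  apply/negP => mz'.
  have := Hall z'; rewrite mz' /=.
  have -> : (z' != v) by rewrite -d_eq0 Hz'.
  by move=> /= H; have := d_sym l z'; have := d_sym l v; flia.
have [b eb Hb] := d_step Em.
have ab : a != b.
  apply/eqP => E; subst b; have := d_tri v a l; have := d_sym v a; flia.
have zb : z = b.
  case: (eqVneq z b) => // zb.
  by have := deg3 ez'z ea eb za zb ab; rewrite (negbTE nmz').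
subst b; have := d_sym v z; flia.
Qed.

Lemma MF_leg v l u : terminal e v l -> e v u -> d u l < d v l ->
  forall z, z \in br v u -> ~~ major e z.
Proof.
move=> tvl evu hu z zin.
have H := GC tvl evu hu zin.
move: (tvl) => /and3P [mv ll /forallP Hall].
apply/negP => mz.
have zv : z != v by apply/eqP => E; move: zin; rewrite E inbr d_refl ltn0.
have := Hall z; rewrite mz zv /= => H'.
have : 0 < d v z by rewrite lt0n d_eq0 eq_sym.
have := d_sym l z; have := d_sym l v; flia.
Qed.

Lemma Tv_sub v z : z \in Tv e v -> z != v -> exists l u,
  [/\ terminal e v l, e v u, d u l < d v l & z \in br v u].
Proof.
rewrite inE => /asboolP [l tvl op] zv.
have H := on_path_geo op.
have : 0 < d v z by rewrite lt0n d_eq0 eq_sym.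
case E: (d v z) => [|k] // _.
have [s es Hs] := d_step E.
exists l, s; split => //.
  have := d_tri s z l; flia.
rewrite inbr; flia.
Qed.

Lemma Tv_sup v l u z : terminal e v l -> e v u -> d u l < d v l -> z \in br v u ->
  z \in Tv e v :\ v.
Proof.
move=> tvl evu hu zin.
have zv : z != v by apply/eqP => E; move: zin; rewrite E inbr d_refl ltn0.
rewrite !inE zv /=; apply/asboolP; exists l => //.
exact: GV (GC tvl evu hu zin).
Qed.

Lemma v_in_Tv v l : terminal e v l -> v \in Tv e v.
Proof.
move=> tvl; rewrite inE; apply/asboolP; exists l => //.
by apply: GV; rewrite d_refl.
Qed.

Lemma Tv_disj v w z : v != w -> z \in Tv e v -> z != v -> z \in Tv e w -> z != w -> False.
Proof.
move=> vw zv nzv zw nzw.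
have [l [u [tvl evu hu zin]]] := Tv_sub zv nzv.
have [l' [u' [twl ewu hu' zin']]] := Tv_sub zw nzw.
move: (tvl) (twl) => /and3P [mv _ _] /and3P [mw _ _].
have w1 : w \notin br v u by apply/negP => /(MF_leg tvl evu hu); rewrite mw.
have v1 : v \notin br w u' by apply/negP => /(MF_leg twl ewu hu'); rewrite mv.
move: w1 v1 zin zin'; rewrite !inbr -!leqNgt => w1 v1 zin zin'.
have w2 : d v w < d u w by case: (dich w evu); flia.
have v2 : d w v < d u' v by case: (dich v ewu); flia.
have S1 := Sep evu zin w2; have S2 := Sep ewu zin' v2.
have h1 : d v z = (d u z).+1 by case: (dich z evu) => H; flia.
have h2 : d w z = (d u' z).+1 by case: (dich z ewu) => H; flia.
have p : 0 < d v w by rewrite lt0n d_eq0.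
move: (d_sym v w) (d_sym w z) (d_sym v z) => s1 s2 s3.
clear -S1 S2 h1 h2 p s1 s2 s3; flia.
Qed.

Definition W (l : V) : bool := [exists c in M2 e, terminal e c l].

Definition Two (A : {set V}) : Prop :=
  exists l1 l2, [/\ l1 != l2, l1 \in A, l2 \in A, W l1 & W l2].

Lemma Two_mono (A B : {set V}) : A \subset B -> Two A -> Two B.
Proof.
move=> /subsetP sAB [l1 [l2 [n12 i1 i2 w1 w2]]].
by exists l1, l2; split => //; apply: sAB.
Qed.

Lemma BL' a b : e a b -> (exists2 w, w \in br a b & major e w) -> Two (br a b).
Proof.
move=> eab H; have [c [cM [l1 [l2 [n12 i1 i2 t1 t2]]]]] := BL eab H.
exists l1, l2; split => //; apply/existsP; exists c; by rewrite cM.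
Qed.

Lemma VL m a b : e m a -> e m b -> a != b -> (exists w, major e w) ->
  Two (br m a :|: br m b).
Proof.
move=> ea eb ab [w mw].
case: (boolP [exists z, (z \in br m a) && major e z]).
  case/existsP => z /andP [zi mz].
  apply: (Two_mono (subsetUl _ _)); apply: BL' => //; by exists z.
move/existsPn => Na.
case: (boolP [exists z, (z \in br m b) && major e z]).
  case/existsP => z /andP [zi mz].
  apply: (Two_mono (subsetUr _ _)); apply: BL' => //; by exists z.
move/existsPn => Nb.
have MFa : forall z, z \in br m a -> ~~ major e z.
  by move=> z zi; have := Na z; rewrite zi.
have MFb : forall z, z \in br m b -> ~~ major e z.
  by move=> z zi; have := Nb z; rewrite zi.
case: (boolP (major e m)) => mm.
  have [l1 i1 t1] := TL mm ea MFa.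
  have [l2 i2 t2] := TL mm eb MFb.
  have n12 : l1 != l2 by apply/eqP => E; subst l2; exact: (br_disj ea eb ab i1 i2).
  have mM2 := two_ter t1 t2 n12.
  exists l1, l2; split => //; [by rewrite in_setU i1 | by rewrite in_setU i2 orbT | |]; apply/existsP; exists m; by rewrite mM2.
exfalso.
have wm : w != m by apply/eqP => E; subst w; rewrite mw in mm.
have : 0 < d m w by rewrite lt0n d_eq0 eq_sym.
case E: (d m w) => [|k] // _.
have [s es Hs] := d_step E.
have wi : w \in br m s by rewrite inbr; flia.
case: (eqVneq s a) => [Esa|sa].
  by subst s; move: (MFa w wi); rewrite mw.
case: (eqVneq s b) => [Esb|sb].
  by subst s; move: (MFb w wi); rewrite mw.
have as1 : a != s by rewrite eq_sym.
have bs1 : b != s by rewrite eq_sym.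
have := deg3 ea eb es ab as1 bs1; by rewrite (negbTE mm).
Qed.

Lemma mid x y i : i <= d x y -> exists m, d x m = i /\ d m y = d x y - i.
Proof.
elim: i => [|i IH] hi; first by exists x; rewrite d_refl subn0.
have [m [h1 h2]] := IH (ltnW hi).
have Em : d m y = (d x y - i.+1).+1 by flia.
have [m' em' Hm'] := d_step Em.
exists m'; split => //.
have := d_tri x m m'; rewrite (d_edge em'); have := d_tri x m' y; flia.
Qed.

Lemma Rset_in x y z : (z \in Rset e x y) = (d x z != d y z).
Proof. by rewrite inE. Qed.

Lemma resolve_two x y : x != y -> (exists w, major e w) -> Two (Rset e x y).
Proof.
move=> xy Hw.
have n1 : 0 < d x y by rewrite lt0n d_eq0.
have := odd_double_half (d x y); rewrite -muln2.
set k := (d x y)./2.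
case: (odd (d x y)) => /= Hn.
  have [m [hm1 hm2]] := @mid x y k ltac:(flia).
  have Em : d m y = k.+1 by flia.
  have [c ec Hc] := d_step Em.
  have ecm : e c m by rewrite sym_e.
  have S1 : br c m \subset Rset e x y.
    apply/subsetP => z; rewrite inbr Rset_in => hz.
    have hy : d c y < d m y by flia.
    have := Sep ecm hz hy; have := d_tri x m z.
    have := d_sym y c; flia.
  have S2 : br m c \subset Rset e x y.
    apply/subsetP => z; rewrite inbr Rset_in => hz.
    have hx : d m x < d c x by have := d_tri x c y; have := d_sym x c; have := d_sym x m; flia.
    have := Sep ec hz hx; have := d_tri y c z.
    have := d_sym x m; have := d_sym y c; flia.
  case: Hw => w mw.
  case: (dich w ec) => H.
    apply: (Two_mono S1); apply: BL' => //; exists w => //; rewrite inbr; flia.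
  apply: (Two_mono S2); apply: BL' => //; exists w => //; rewrite inbr; flia.
have k1 : 0 < k by flia.
have [m [hm1 hm2]] := @mid x y k ltac:(flia).
have Emx : d m x = (k.-1).+1 by rewrite d_sym; flia.
have Emy : d m y = (k.-1).+1 by flia.
have [a ea Ha] := d_step Emx.
have [b eb Hb] := d_step Emy.
have ab : a != b.
  apply/eqP => E; subst b; have := d_tri x a y; have := d_sym x a; flia.
apply: (Two_mono _ (VL ea eb ab Hw)).
apply/subsetP => z; rewrite inE !inbr Rset_in => /orP [] hz.
  have hy : d m y < d a y by have := d_tri x a y; have := d_sym x a; flia.
  have := Sep ea hz hy; have := d_tri x a z.
  have := d_sym x a; have := d_sym y m; flia.
have hx : d m x < d b x by have := d_tri y b x; have := d_sym y b; have := d_sym x y; flia.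
have := Sep eb hz hx; have := d_tri y b z.
have := d_sym y b; have := d_sym x m; flia.
Qed.


Lemma disjI (A B : {set V}) : (forall z, z \in A -> z \in B -> False) -> [disjoint A & B].
Proof.
move=> H; rewrite disjoint_subset; apply/subsetP => z zA; rewrite inE; apply/negP => zB.
exact: H zA zB.
Qed.

Definition uf v l := odflt v [pick u | e v u && (d u l < d v l)].

Lemma ufP v l : v != l -> e v (uf v l) /\ d (uf v l) l < d v l.
Proof.
move=> vl; rewrite /uf; case: pickP => [u /andP [eu hu] //|none].
exfalso.
have : 0 < d v l by rewrite lt0n d_eq0.
case E: (d v l) => [|k] // _.
have [s es Hs] := d_step E.
by have := none s; rewrite es Hs E ltnSn.
Qed.

Lemma term_neq v l : terminal e v l -> v != l.
Proof.
case/and3P => mv ll _; apply/eqP => E; subst l; exact: (major_neq_leaf mv ll).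
Qed.

Lemma term_uniq v w l : terminal e v l -> terminal e w l -> v = w.
Proof.
case/and3P => mv _ /forallP H1; case/and3P => mw _ /forallP H2.
case: (eqVneq v w) => // vw; exfalso.
have := H1 w; have := H2 v; rewrite mv mw vw eq_sym vw /=; flia.
Qed.

Variable R : realFieldType.
Local Open Scope ring_scope.

Lemma gsum_sub (g : V -> R) (A B : {set V}) : (forall s, 0 <= g s) -> A \subset B ->
  gsum g A <= gsum g B.
Proof.
move=> g0 sAB; rewrite /gsum (@big_setID _ _ _ _ B A) /=.
have -> : B :&: A = A by apply/setIidPr.
by rewrite -[X in X <= _]addr0 lerD2l sumr_ge0.
Qed.

Lemma gsumU (g : V -> R) (A B : {set V}) : [disjoint A & B] ->
  gsum g (A :|: B) = gsum g A + gsum g B.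
Proof.
move=> dAB; rewrite /gsum -bigU //; apply: eq_bigl => s; by rewrite !inE.
Qed.

Lemma half_bound (T : {set V}) (x : V -> R) : (1 < #|T|)%N ->
  (forall i j, i \in T -> j \in T -> i != j -> 1 <= x i + x j) ->
  #|T|%:R / 2 <= \sum_(i in T) x i.
Proof.
move=> T2 H.
suff : 0 <= \sum_(i in T) (x i *+ 2 - 1).
  rewrite sumrB sumr_const sumrMnl mulr2n; lra.
case: (boolP [exists i in T, x i < 2^-1]).
  case/existsP => i0 /andP [i0T hi0].
  have [j0 [j0T j0i]] : exists j0, j0 \in T /\ j0 != i0.
    case/card_gt1P: T2 => a [b [aT bT ab]].
    case: (eqVneq a i0) => [E|ai]; last by exists a.
    by exists b; split => //; rewrite -E eq_sym.
  rewrite (bigD1 i0) //= (bigD1 j0) /=; last by rewrite j0T j0i.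
  have rest : 0 <= \sum_(i | (i \in T) && (i != i0) && (i != j0)) (x i *+ 2 - 1).
    apply: sumr_ge0 => i /andP [/andP [iT ii0] _].
    have := H i i0 iT i0T ii0; rewrite mulr2n; lra.
  have := H j0 i0 j0T i0T j0i; move: rest; rewrite !mulr2n.
  lra.
move/existsPn => Hall.
apply: sumr_ge0 => i iT; have := Hall i; rewrite iT /= -leNgt [x i *+ 2]mulr2n; lra.
Qed.

Lemma lower_v (g : V -> R) v : resolving e g -> v \in M2 e ->
  (ter e v)%:R / 2 <= gsum g (Tv e v :\ v).
Proof.
case=> g01 gres vM2.
have g0 : forall s, 0 <= g s by move=> s; case/andP: (g01 s).
have T2 : (1 < #|[set l | terminal e v l]|)%N.
  by move: vM2; rewrite !inE => /andP [_ H].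
set T := [set l | terminal e v l] in T2 *.
have tv : forall l, l \in T -> terminal e v l by move=> l; rewrite inE.
have key : forall l, l \in T -> e v (uf v l) /\ (d (uf v l) l < d v l)%N.
  move=> l lT; apply: ufP; exact: term_neq (tv _ lT).
have udiff : forall l1 l2, l1 \in T -> l2 \in T -> l1 != l2 -> uf v l1 != uf v l2.
  move=> l1 l2 i1 i2 n12; apply/eqP => E.
  have [e1 h1] := key _ i1; have [e2 h2] := key _ i2.
  have g1 := GC (tv _ i1) e1 h1 (z:=l2) ltac:(by rewrite inbr E).
  have g2 := GC (tv _ i2) e2 h2 (z:=l1) ltac:(by rewrite inbr -E).
  have : d l1 l2 == 0%N by have := d_sym l1 l2; flia.
  by rewrite d_eq0 (negbTE n12).
set B := fun l => br v (uf v l).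
have Bdisj : forall l1 l2, l1 \in T -> l2 \in T -> l1 != l2 -> [disjoint B l1 & B l2].
  move=> l1 l2 i1 i2 n12; apply: disjI => z z1 z2.
  have [e1 _] := key _ i1; have [e2 _] := key _ i2.
  exact: (br_disj e1 e2 (udiff _ _ i1 i2 n12) z1 z2).
have Bsub : forall l, l \in T -> B l \subset Tv e v :\ v.
  move=> l lT; apply/subsetP => z zin; have [e1 h1] := key _ lT.
  exact: (Tv_sup (tv _ lT) e1 h1 zin).
set F := fun l => if l \in T then B l else set0.
have Fdisj : forall i j, i != j -> [disjoint F i & F j].
  move=> i j ij; rewrite /F; case: ifP => iT; case: ifP => jT; [exact: Bdisj| | |];
    by apply: disjI => z; rewrite ?inE.
have step1 : \sum_(l in T) gsum g (B l) <= gsum g (Tv e v :\ v).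
  have -> : \sum_(l in T) gsum g (B l) = gsum g (\bigcup_l F l).
    rewrite /gsum (partition_disjoint_bigcup _ _ Fdisj) big_mkcond /=.
    apply: eq_bigr => l _; rewrite /F; case: ifP => // _; by rewrite big_set0.
  apply: gsum_sub => //; apply/subsetP => z /bigcupP [l _]; rewrite /F.
  case: ifP => lT; last by rewrite inE.
  by move/(subsetP (Bsub l lT)).
apply: le_trans step1.
apply: half_bound => // l1 l2 i1 i2 n12.
have [e1 h1] := key _ i1; have [e2 h2] := key _ i2.
have := gres _ _ (udiff _ _ i1 i2 n12).
rewrite -(gsumU g (Bdisj _ _ i1 i2 n12)) => H; apply: (le_trans H).
apply: gsum_sub => //; apply/subsetP => z; rewrite Rset_in in_setU !inbr => Hz.
rewrite -[_ || _]negbK negb_or; apply/negP => /andP [n1 n2]; move: n1 n2; rewrite -!leqNgt => n1 n2.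
have a1 : d (uf v l1) z = (d v z).+1 by case: (dich z e1) => Hd; flia.
have a2 : d (uf v l2) z = (d v z).+1 by case: (dich z e2) => Hd; flia.
by rewrite a1 a2 eqxx in Hz.
Qed.


Definition hw (z : V) : R := if W z then 2^-1 else 0.

Lemma hw_res : (exists w, major e w) -> resolving e hw.
Proof.
move=> Hw; split.
  by move=> s; rewrite /hw; case: (W s); apply/andP; split; lra.
move=> x y xy.
have [l1 [l2 [n12 i1 i2 w1 w2]]] := resolve_two xy Hw.
rewrite /gsum (bigD1 l1) //= (bigD1 l2) /=; last by rewrite i2 eq_sym n12.
have : 0 <= \sum_(i | (i \in Rset e x y) && (i != l1) && (i != l2)) hw i.
  by apply: sumr_ge0 => i _; rewrite /hw; case: (W i); lra.
rewrite /hw w1 w2; lra.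
Qed.

Lemma hw_sum : gsum hw setT = \sum_(v in M2 e) (ter e v)%:R / 2.
Proof.
have E : forall z, hw z = \sum_(v in M2 e) (if terminal e v z then 2^-1 else 0).
  move=> z; rewrite /hw /W; case: existsP => [[c /andP [cM tc]]|none].
    rewrite (bigD1 c) //= tc big1 ?addr0 // => v /andP [vM vc].
    case: ifP => // tv; exfalso.
    by move: vc; rewrite (term_uniq tv tc) eqxx.
  rewrite big1 // => v vM; case: ifP => // tv; exfalso; apply: none.
  by exists v; rewrite vM tv.
rewrite /gsum (eq_bigr _ (fun z _ => E z)) exchange_big /=; apply: eq_bigr => v _.
transitivity (\sum_(z in [set l | terminal e v l]) (2^-1 : R)).
  rewrite [LHS]big_mkcond [RHS]big_mkcond; apply: eq_bigr => z _; by rewrite !inE.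
by rewrite sumr_const /ter -[2^-1 *+ _]mulr_natl.
Qed.

Lemma upper (g : V -> R) : (forall s, 0 <= g s) ->
  \sum_(v in M2 e) gsum g (Tv e v :\ v) <= gsum g setT.
Proof.
move=> g0.
set G := fun v => if v \in M2 e then Tv e v :\ v else set0.
have Gdisj : forall i j, i != j -> [disjoint G i & G j].
  move=> i j ij; rewrite /G; case: ifP => iT; case: ifP => jT; last 3 first.
  - by apply: disjI => z; rewrite ?inE.
  - by apply: disjI => z; rewrite ?inE.
  - by apply: disjI => z; rewrite ?inE.
  apply: disjI => z; rewrite !in_setD1 => /andP [zi zTi] /andP [zj zTj].
  exact: (Tv_disj ij zTi zi zTj zj).
have -> : \sum_(v in M2 e) gsum g (Tv e v :\ v) = gsum g (\bigcup_v G v).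
  rewrite /gsum (partition_disjoint_bigcup _ _ Gdisj) big_mkcond /=.
  apply: eq_bigr => v _; rewrite /G; case: ifP => // _; by rewrite big_set0.
by apply: gsum_sub => //; apply/subsetT.
Qed.

End TreeTheory.

Local Open Scope ring_scope.

Theorem lemma3p13 (R : realFieldType) (V : finType) (e : rel V) (g : V -> R) :
  is_tree e -> (1 <= ex e)%N -> min_resolving e g ->
  (forall v, v \in M2 e -> gsum g (Tv e v :\ v) = (ter e v)%:R / 2) /\
  is_dimf e (\sum_(v in M2 e) (gsum g (Tv e v) - g v)).
Proof.
case=> sym_e irr_e conn_e acyc ex1 [gres gmin].
have g0 : forall s, 0 <= g s by move=> s; case: gres => g01 _; case/andP: (g01 s).
have Hw : exists w, major e w.
  move: ex1; rewrite /ex card_gt0 => /set0Pn [w]; rewrite inE => /andP [mw _].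
  by exists w.
have hres := hw_res sym_e irr_e conn_e acyc R Hw.
have hs := hw_sum e R.
have low := fun v (vM : v \in M2 e) => lower_v sym_e irr_e conn_e acyc gres vM.
have up := upper sym_e irr_e conn_e acyc g0.
have tot : gsum g setT <= \sum_(v in M2 e) (ter e v)%:R / 2.
  by rewrite -hs; apply: gmin.
have lowsum : \sum_(v in M2 e) (ter e v)%:R / 2 <= \sum_(v in M2 e) gsum g (Tv e v :\ v).
  by apply: ler_sum => v vM; apply: low.
have eqv : forall v, v \in M2 e -> gsum g (Tv e v :\ v) = (ter e v)%:R / 2.
  have Z := @psumr_eq0P _ _ (mem (M2 e))
     (fun v => gsum g (Tv e v :\ v) - (ter e v)%:R / 2).
  move=> v vM; apply/eqP; rewrite -subr_eq0; apply/eqP; apply: (Z _ _ v vM).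
    by move=> i iM; rewrite subr_ge0; apply: low.
  rewrite sumrB; lra.
have gtot : gsum g setT = \sum_(v in M2 e) (ter e v)%:R / 2 by lra.
have val : \sum_(v in M2 e) (gsum g (Tv e v) - g v) = gsum g setT.
  rewrite gtot; apply: eq_bigr => v vM; rewrite -(eqv v vM).
  have [l tl] : exists l, terminal e v l.
    move: vM; rewrite !inE => /andP [/andP [_ H] _].
    by move: H; rewrite /ter card_gt0 => /set0Pn [l]; rewrite inE; exists l.
  rewrite /gsum (bigD1 v) ?(v_in_Tv sym_e irr_e conn_e tl) //=.
  rewrite addrC addrK; apply: eq_bigl => s; by rewrite !inE andbC.
split => //.
rewrite val; split; first by exists g.
by move=> h hr; apply: gmin.
Qed.
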